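(* Let $R$ be a commutative ring with unity, $\lambda$ a length function on $R$-modules, $S=R[x_1,\dots,x_k]$, and let $\bar N=(N_n)_{n\in\mathbb{N}}$ be an increasing filtering of the $S$-module $N$ with degrees $\bar\gamma\in\mathbb{N}^k$. Let $F_{\bar N}(t)=\sum_{n=0}^\infty\lambda(N_n)t^n$. Then $F_{\bar N}=F_{\mathrm{Rees}(\bar N)}$. Consequently, if $\gamma_i>0$ for $i=1,\dots,k$, $\lambda(N_n)<\infty$ for every $n$, and $\mathrm{Rees}(\bar N)$ is Noetherian as an $S[y]$-module, then there is a polynomial $p(t)\in\mathbb{R}[t]$ with \[F_{\bar N}(t)=\frac{p(t)}{(1-t)\prod_{i=1}^k(1-t^{\gamma_i})}.\]
   Context: A length function on $R$-modules is a function $\lambda$ from $R$-modules to $\mathbb{R}_{\ge0}\cup\{\infty\}$ with $\lambda(0)=0$, invariant under isomorphism, additive on short exact sequences, and with $\lambda(M)=\sup\{\lambda(M'):M'\le M$ finitely generated$\}$. An increasing filtering of an $S$-module $N$ with degrees $\bar\gamma=(\gamma_1,\dots,\gamma_k)\in\mathbb{N}^k$ is an increasing sequence of $R$-submodules $N_0\le N_1\le\dots$ with $\bigcup_iN_i=N$ and $x_iN_j\subseteq N_{j+\gamma_i}$ for all $j\in\mathbb{N}$, $i\le k$. Its blow-up $\mathrm{Rees}(\bar N)=\bigoplus_{n\in\mathbb{N}}N_ny^n$ is the graded $S[y]$-module with grading given by this decomposition, with $x_i(vy^j)=(x_iv)y^{j+\gamma_i}$ (so $x_i$ has degree $\gamma_i$)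 and $y(vy^j)=vy^{j+1}$ (so $y$ has degree $1$) for $v\in N_j$, extended $R$-linearly. For an $\mathbb{N}$-graded module $\bar M=\bigoplus M_n$, $F_{\bar M}(t)=\sum_n\lambda(M_n)t^n$. *)

(* Defs.v *)
From HB Require Import structures.
From mathcomp Require Import all_boot all_order all_algebra.
From mathcomp Require Import all_classical all_reals ereal.
Set Implicit Arguments. Unset Strict Implicit. Unset Printing Implicit Defensive.
Import Order.TTheory GRing.Theory Num.Theory.
Local Open Scope ring_scope.
Local Open Scope classical_set_scope.

(* A length function takes a module M and a
   submodule P of M (the module itself is P = predT) and returns its length. *)

Section Defs.
Variables (R : comPzRingType) (Real : realType).

Definition is_submod (M : lmodType R) (P : M -> Prop) : Prop :=
  P 0 /\ forall (a : R) (u v : M), P u -> P v -> P (a *: u + v).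

Definition linear_on (M M' : lmodType R) (P : M -> Prop) (f : M -> M') : Prop :=
  forall (a : R) (u v : M), P u -> P v -> f (a *: u + v) = a *: f u + f v.

Definition span_of (M : lmodType R) (s : seq M) : M -> Prop :=
  fun v => exists c : 'I_(size s) -> R, v = \sum_(i < size s) c i *: s`_i.

Definition fin_gen_submod (M : lmodType R) (Q : M -> Prop) : Prop :=
  exists s : seq M, forall v, Q v <-> span_of s v.

Definition length_fun
  (lam : forall M : lmodType R, (M -> Prop) -> \bar Real) : Prop :=
  (forall (M : lmodType R) (P : M -> Prop), (0 <= lam M P)%E) /\
  (forall (M : lmodType R), lam M (fun v => v = 0) = 0%E) /\
  (forall (M M' : lmodType R) (P : M -> Prop) (P' : M' -> Prop) (f : M -> M'),
      is_submod P -> is_submod P' -> linear_on P f ->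
      (forall u v, P u -> P v -> f u = f v -> u = v) ->
      (forall w, P' w <-> exists2 u, P u & f u = w) ->
      lam M P = lam M' P') /\
  (* additivity on short exact sequences 0 -> A -> B -> C -> 0 *)
  (forall (M1 M2 M3 : lmodType R) (A : M1 -> Prop) (B : M2 -> Prop)
          (C : M3 -> Prop) (f : M1 -> M2) (g : M2 -> M3),
      is_submod A -> is_submod B -> is_submod C ->
      linear_on A f -> linear_on B g ->
      (forall u v, A u -> A v -> f u = f v -> u = v) ->
      (forall u, A u -> B (f u)) ->
      (forall w, C w <-> exists2 v, B v & g v = w) ->
      (forall v, B v -> (g v = 0 <-> exists2 u, A u & f u = v)) ->
      lam M2 B = (lam M1 A + lam M3 C)%E) /\
  (forall (M : lmodType R) (P : M -> Prop), is_submod P ->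
      lam M P = ereal_sup [set lam M Q | Q in
                   [set Q : M -> Prop | is_submod Q /\ fin_gen_submod Q /\
                                        (forall v, Q v -> P v)]]).

(* An S-module, S = R[x_1,...,x_k], is an R-module N with k pairwise
   commuting R-linear endomorphisms xs i (the actions of the variables). *)
Definition S_module_str (N : lmodType R) (k : nat) (xs : 'I_k -> N -> N) : Prop :=
  (forall i, linear_on (fun _ => True) (xs i)) /\
  (forall i j v, xs i (xs j v) = xs j (xs i v)).

Definition incr_filtering (N : lmodType R) (k : nat) (xs : 'I_k -> N -> N)
    (gam : 'I_k -> nat) (Nf : nat -> N -> Prop) : Prop :=
  (forall n, is_submod (Nf n)) /\
  (forall n v, Nf n v -> Nf n.+1 v) /\
  (forall v : N, exists n, Nf n v) /\
  (forall i j v, Nf j v -> Nf (j + gam i)%N (xs i v)).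

(* The blow-up Rees(N) = (+)_n N_n y^n, realised inside the R-module nat -> N:
   an element is a finitely supported sequence (v_n) with v_n in N_n. *)
Definition rees (N : lmodType R) (Nf : nat -> N -> Prop) : (nat -> N) -> Prop :=
  fun w => (forall n, Nf n (w n)) /\ exists m, forall n, (m <= n)%N -> w n = 0.

Definition rees_comp (N : lmodType R) (Nf : nat -> N -> Prop) (n : nat)
  : (nat -> N) -> Prop :=
  fun w => rees Nf w /\ forall m, m <> n -> w m = 0.

Definition rees_x (N : lmodType R) (k : nat) (xs : 'I_k -> N -> N)
    (gam : 'I_k -> nat) (i : 'I_k) (w : nat -> N) : nat -> N :=
  fun m => if (gam i <= m)%N then xs i (w (m - gam i)%N) else 0.

Definition rees_y (N : lmodType R) (w : nat -> N) : nat -> N :=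
  fun m => if m is m'.+1 then w m' else 0.

Definition rees_Sy_submod (N : lmodType R) (k : nat) (xs : 'I_k -> N -> N)
    (gam : 'I_k -> nat) (Nf : nat -> N -> Prop) (Q : (nat -> N) -> Prop) : Prop :=
  is_submod Q /\ (forall w, Q w -> rees Nf w) /\
  (forall i w, Q w -> Q (rees_x xs gam i w)) /\
  (forall w, Q w -> Q (rees_y w)).

Definition rees_noetherian (N : lmodType R) (k : nat) (xs : 'I_k -> N -> N)
    (gam : 'I_k -> nat) (Nf : nat -> N -> Prop) : Prop :=
  forall Q : nat -> (nat -> N) -> Prop,
    (forall n, rees_Sy_submod xs gam Nf (Q n)) ->
    (forall n w, Q n w -> Q n.+1 w) ->
    exists n0, forall n, (n0 <= n)%N -> forall w, Q n w <-> Q n0 w.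

End Defs.

(* Main.v *)
Require Import Defs.
From HB Require Import structures.
From mathcomp Require Import all_boot all_order all_algebra.
From mathcomp Require Import all_classical all_reals ereal.
From mathcomp Require Import zify ring lra.
Set Implicit Arguments. Unset Strict Implicit. Unset Printing Implicit Defensive.
Import Order.TTheory GRing.Theory Num.Theory.
Local Open Scope ring_scope.
Section SeqPart.
Variable (Real : realType).

Definition Sh (d : nat) (g : nat -> Real) : nat -> Real :=
  fun n => if (d <= n)%N then g (n - d)%N else 0.
Definition Df (d : nat) (g : nat -> Real) : nat -> Real := fun n => g n - Sh d g n.
Fixpoint Dl (s : seq nat) (g : nat -> Real) : nat -> Real :=
  if s is d :: s' then Df d (Dl s' g) else g.
Definition EZ (g : nat -> Real) := exists m, forall n, (m <= n)%N -> g n = 0.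
Definition conv (q : {poly Real}) (h : nat -> Real) : nat -> Real :=
  fun n => \sum_(j < n.+1) q`_j * h (n - j)%N.
Definition subf (f g : nat -> Real) : nat -> Real := fun n => f n - g n.

Lemma Sh_Sh a b g : Sh a (Sh b g) = Sh b (Sh a g).
Proof.
apply: funext => n; rewrite /Sh.
case: (leqP a n) => ha; case: (leqP b n) => hb //;
  case: (leqP b (n - a)) => h1; case: (leqP a (n - b)) => h2 //;
  try (exfalso; lia).
by congr g; lia.
Qed.

Lemma Sh_sub d f g : Sh d (subf f g) = subf (Sh d f) (Sh d g).
Proof. by apply: funext => n; rewrite /Sh /subf; case: ifP => // _; rewrite subr0. Qed.

Lemma Df_sub d f g : Df d (subf f g) = subf (Df d f) (Df d g).
Proof.
by apply: funext => n; rewrite /Df /Sh /subf; case: ifP => _; ring.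
Qed.

Lemma Df_Sh a b g : Df a (Sh b g) = Sh b (Df a g).
Proof.
apply: funext => n; rewrite /Df.
have := congr1 (fun F => F n) (Sh_Sh a b g); rewrite /= => ->.
by rewrite /Sh; case: ifP => _; ring.
Qed.

Lemma Df_Df a b g : Df a (Df b g) = Df b (Df a g).
Proof.
have E d e : Df d (Df e g) = fun n => g n - Sh e g n - (Sh d g n - Sh d (Sh e g) n).
  apply: funext => n; rewrite {1}/Df.
  have -> : Df e g = subf g (Sh e g) by [].
  by rewrite Sh_sub.
rewrite !E Sh_Sh; apply: funext => n; ring.
Qed.

Lemma Dl_sub s f g : Dl s (subf f g) = subf (Dl s f) (Dl s g).
Proof. by elim: s => [|d s IH] //=; rewrite IH Df_sub. Qed.

Lemma Dl_Df s d g : Dl s (Df d g) = Df d (Dl s g).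
Proof. by elim: s => [|e s IH] //=; rewrite IH Df_Df. Qed.

Lemma Dl_Sh s d g : Dl s (Sh d g) = Sh d (Dl s g).
Proof. by elim: s => [|e s IH] //=; rewrite IH Df_Sh. Qed.

Lemma EZ_sub f g : EZ f -> EZ g -> EZ (subf f g).
Proof.
move=> [m1 H1] [m2 H2]; exists (maxn m1 m2) => n; rewrite geq_max => /andP[h1 h2].
by rewrite /subf H1 // H2 // subr0.
Qed.

Lemma EZ_Sh d g : EZ g -> EZ (Sh d g).
Proof.
move=> [m H]; exists (m + d)%N => n hn; rewrite /Sh.
have hd : (d <= n)%N by apply: leq_trans hn; rewrite leq_addl.
by rewrite hd H // leq_subRL // addnC.
Qed.

Lemma conv_sub q1 q2 h : conv (q1 - q2) h = subf (conv q1 h) (conv q2 h).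
Proof.
apply: funext => n; rewrite /conv /subf -sumrB; apply: eq_bigr => j _.
by rewrite coefB mulrBl.
Qed.

Lemma conv1 h : conv 1 h = h.
Proof.
apply: funext => n; rewrite /conv big_ord_recl /= coef1 eqxx mul1r subn0 big1 ?addr0 //.
by move=> j _; rewrite coef1 /= mul0r.
Qed.

Lemma conv_XnM d q h : conv ('X^d * q) h = Sh d (conv q h).
Proof.
apply: funext => n; rewrite /conv /Sh.
case: (leqP d n) => hd.
- rewrite -(big_mkord xpredT (fun j => ('X^d * q)`_j * h (n - j)%N)).
  rewrite (@big_cat_nat _ _ _ d) /=; [|by []|by rewrite ltnW // ltnS].
  rewrite big_nat_cond big1 ?add0r; last first.
    by move=> j /andP[/andP[_ hj] _]; rewrite coefXnM hj mul0r.
  rewrite -{1}(add0n d) big_addn subSn // big_mkord.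
  apply: eq_bigr => j _; rewrite coefXnM ltnNge leq_addl /= addnK.
  by rewrite addnC subnDA.
- apply: big1 => j _; rewrite coefXnM.
  have -> : (j < d)%N by apply: leq_ltn_trans hd; rewrite -ltnS.
  by rewrite mul0r.
Qed.

Lemma conv_Df d q h : conv ((1 - 'X^d) * q) h = Df d (conv q h).
Proof. by rewrite mulrBl mul1r conv_sub conv_XnM. Qed.

Lemma conv_prod s h : conv (\prod_(d <- s) (1 - 'X^d)) h = Dl s h.
Proof. by elim: s => [|d s IH]; rewrite ?big_nil ?conv1 // big_cons conv_Df IH. Qed.

End SeqPart.
Section LenPart.
Variables (R : comPzRingType) (Real : realType)
  (lam : forall M : lmodType R, (M -> Prop) -> \bar Real).
Arguments lam : clear implicits.
Hypothesis Hlam : length_fun lam.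

Lemma lam_ge0 (M : lmodType R) (P : M -> Prop) : (0 <= lam M P)%E.
Proof. by case: Hlam => H _; apply: H. Qed.

Lemma lam_ext (M : lmodType R) (P Q : M -> Prop) : (forall v, P v <-> Q v) -> lam M P = lam M Q.
Proof. by move=> H; have -> : P = Q by apply: funext => v; apply: propext. Qed.

Lemma submod0 (M : lmodType R) (X : M -> Prop) : is_submod X -> X 0.
Proof. by case. Qed.

Lemma submodL (M : lmodType R) (X : M -> Prop) a u v : is_submod X -> X u -> X v -> X (a *: u + v).
Proof. by move=> [_ H]; apply: H. Qed.

Lemma submodD (M : lmodType R) (X : M -> Prop) u v : is_submod X -> X u -> X v -> X (u + v).
Proof. by move=> [_ H] hu hv; have := H 1 u v hu hv; rewrite scale1r. Qed.

Lemma submodZ (M : lmodType R) (X : M -> Prop) a u : is_submod X -> X u -> X (a *: u).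
Proof. by move=> [H0 H] hu; have := H a u 0 hu H0; rewrite addr0. Qed.

Lemma submodN (M : lmodType R) (X : M -> Prop) u : is_submod X -> X u -> X (- u).
Proof. by move=> hX hu; have := submodZ (-1) hX hu; rewrite scaleN1r. Qed.

Lemma lin0 (M M' : lmodType R) (X : M -> Prop) (f : M -> M') : is_submod X -> linear_on X f -> f 0 = 0.
Proof.
move=> hX hf; have E := hf 1 0 0 (submod0 hX) (submod0 hX).
rewrite !scale1r addr0 in E.
by apply: (@addrI _ (f 0)); rewrite addr0 -E.
Qed.

Lemma linD (M M' : lmodType R) (X : M -> Prop) (f : M -> M') u v : linear_on X f -> X u -> X v ->
  f (u + v) = f u + f v.
Proof. by move=> hf hu hv; have := hf 1 u v hu hv; rewrite !scale1r. Qed.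

Lemma lam_mono (M : lmodType R) (X Y : M -> Prop) : is_submod X -> is_submod Y ->
  (forall v, X v -> Y v) -> (lam M X <= lam M Y)%E.
Proof.
move=> hX hY hXY; case: Hlam => _ [_ [_ [_ Hs]]].
rewrite (Hs _ _ hX) (Hs _ _ hY); apply: ereal_sup_le; apply: image_subset.
by move=> Q [h1 [h2 h3]]; split; [|split] => // v /h3 /hXY.
Qed.

Lemma rank_nullity (M M' : lmodType R) (X : M -> Prop) (f : M -> M') : is_submod X -> linear_on X f ->
  lam M X = (lam M (fun v => X v /\ f v = 0%R) + lam M' (fun w => exists2 u, X u & f u = w))%E.
Proof.
move=> hX hf; case: Hlam => _ [_ [_ [Hses _]]].
apply: (Hses M M M' _ X _ id f).
- split; first by split; [apply: submod0|apply: lin0 hf].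
  move=> a u v [hu fu] [hv fv]; split; first exact: submodL.
  by rewrite hf // fu fv scaler0 addr0.
- exact: hX.
- split; first by exists 0; [apply: submod0 | apply: lin0 hf].
  move=> a _ _ [u hu <-] [v hv <-]; exists (a *: u + v); last by rewrite hf.
  exact: submodL.
- by move=> a u v _ _.
- exact: hf.
- by move=> u v _ _.
- by move=> u [].
- by [].
- move=> v hv; split; first by move=> fv; exists v.
  by move=> [u [_ fu] <-].
Qed.

Definition prodP (M : lmodType R) (X Y : M -> Prop) : (M * M)%type -> Prop := fun p => X p.1 /\ Y p.2.

Lemma prodP_submod (M : lmodType R) (X Y : M -> Prop) : is_submod X -> is_submod Y -> is_submod (prodP X Y).
Proof.
move=> hX hY; split; first by split; apply: submod0.
move=> a u v [h1 h2] [h3 h4]; split; exact: submodL.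
Qed.

Lemma lam_prod (M : lmodType R) (X Y : M -> Prop) : is_submod X -> is_submod Y ->
  lam (M * M)%type (prodP X Y) = (lam M X + lam M Y)%E.
Proof.
move=> hX hY; case: Hlam => _ [_ [_ [Hses _]]].
apply: (Hses M (M * M)%type M X _ Y (fun x => (x, 0)) snd).
- exact: hX.
- exact: prodP_submod.
- exact: hY.
- move=> a u v _ _ /=; apply/eqP; rewrite xpair_eqE /= eqxx /=.
  by rewrite scaler0 addr0.
- by move=> a u v _ _.
- by move=> u v _ _ [].
- by move=> u hu; split => //; apply: submod0.
- move=> w; split; first by move=> hw; exists (0, w) => //; split => //; apply: submod0.
  by move=> [p [_ ?] <-].
- move=> [p1 p2] [h1 h2] /=; split; first by move=> ->; exists p1.
  by move=> [u _ [_ <-]].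
Qed.

Definition plusP (M : lmodType R) (X Y : M -> Prop) : M -> Prop :=
  fun v => exists x y, [/\ X x, Y y & v = x + y].
Definition capP (M : lmodType R) (X Y : M -> Prop) : M -> Prop := fun v => X v /\ Y v.

Lemma plusP_submod (M : lmodType R) (X Y : M -> Prop) : is_submod X -> is_submod Y -> is_submod (plusP X Y).
Proof.
move=> hX hY; split; first by exists 0, 0; split; rewrite ?addr0 //; apply: submod0.
move=> a _ _ [x [y [hx hy ->]]] [x' [y' [hx' hy' ->]]].
exists (a *: x + x'), (a *: y + y'); split; [exact: submodL|exact: submodL|].
by rewrite scalerDr addrACA.
Qed.

Lemma capP_submod (M : lmodType R) (X Y : M -> Prop) : is_submod X -> is_submod Y -> is_submod (capP X Y).
Proof.
move=> hX hY; split; first by split; apply: submod0.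
by move=> a u v [h1 h2] [h3 h4]; split; exact: submodL.
Qed.

Lemma lam_modular (M : lmodType R) (X Y : M -> Prop) : is_submod X -> is_submod Y ->
  (lam M (plusP X Y) + lam M (capP X Y) = lam M X + lam M Y)%E.
Proof.
move=> hX hY; case: Hlam => _ [_ [_ [Hses _]]].
rewrite -(lam_prod hX hY) addeC.
symmetry; apply: (Hses M (M * M)%type M _ _ _ (fun z => (z, - z)) (fun p => p.1 + p.2)).
- exact: capP_submod.
- exact: prodP_submod.
- exact: plusP_submod.
- move=> a u v _ _ /=; apply/eqP; rewrite xpair_eqE /= eqxx /=.
  by rewrite opprD scalerN.
- by move=> a u v _ _ /=; rewrite scalerDr addrACA.
- by move=> u v _ _ [].
- by move=> u [h1 h2]; split => //=; apply: submodN.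
- move=> w; split.
    by move=> [x [y [hx hy ->]]]; exists (x, y).
  by move=> [[x y] [hx hy] <-]; exists x, y.
- move=> [p1 p2] [h1 h2] /=; split.
    move=> E; exists p1.
      split => //; have -> : p1 = - p2 by apply/eqP; rewrite -addr_eq0 E.
      exact: submodN.
    by congr pair; apply/eqP; rewrite eq_sym -addr_eq0 addrC E.
  by move=> [u _ [<- <-]]; rewrite subrr.
Qed.

End LenPart.
Section MainPart.
Variables (R : comPzRingType) (Real : realType)
  (lam : forall M : lmodType R, (M -> Prop) -> \bar Real).
Arguments lam : clear implicits.
Hypothesis Hlam : length_fun lam.
Variables (N : lmodType R) (k : nat) (xs : 'I_k -> N -> N) (gam : 'I_k -> nat)
  (Nf : nat -> N -> Prop).
Hypothesis HS : S_module_str xs.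
Hypothesis HF : incr_filtering xs gam Nf.

Definition op (o : option 'I_k) : N -> N := if o is Some i then xs i else id.
Definition deg (o : option 'I_k) : nat := if o is Some i then gam i else 1%N.

Lemma submodT : is_submod (fun _ : N => True).
Proof. by []. Qed.

Lemma op_lin o (X : N -> Prop) : linear_on X (op o).
Proof. case: o => [i|] a u v _ _ //=; case: HS => H _; exact: H. Qed.

Lemma op_comm o o' v : op o (op o' v) = op o' (op o v).
Proof. by case: o => [i|]; case: o' => [j|] //=; case: HS => _ H; apply: H. Qed.

Lemma op0 o : op o 0 = 0.
Proof. exact: (lin0 submodT (@op_lin o _)). Qed.

Lemma opD o u v : op o (u + v) = op o u + op o v.
Proof. exact: (linD (@op_lin o (fun _ => True))). Qed.

Lemma Nf_submod n : is_submod (Nf n).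
Proof. by case: HF => H _; apply: H. Qed.

Lemma Nf_op o n v : Nf n v -> Nf (n + deg o)%N (op o v).
Proof.
case: HF => _ [Hi [_ Hx]]; case: o => [i|] /=; first exact: Hx.
by rewrite addn1; apply: Hi.
Qed.

Definition fam_ok (P : nat -> N -> Prop) :=
  [/\ forall n, is_submod (P n),
      forall o n v, P n v -> P (n + deg o)%N (op o v) &
      forall n v, P n v -> Nf n v].

Definition subF (A B : nat -> N -> Prop) := forall n v, A n v -> B n v.

Definition hh (A B : nat -> N -> Prop) : nat -> Real :=
  fun n => fine (lam N (B n)) - fine (lam N (A n)).

Hypothesis Hfin : forall n, (lam N (Nf n) < +oo)%E.

Lemma finE (P : N -> Prop) m : is_submod P -> (forall v, P v -> Nf m v) ->
  lam N P = (fine (lam N P))%:E.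
Proof.
move=> hP hPm; rewrite fineK // ge0_fin_numE; last exact: lam_ge0.
apply: le_lt_trans (Hfin m); apply: lam_mono => //; exact: Nf_submod.
Qed.

Lemma efin3 (a b c : Real) : a%:E = (b%:E + c%:E)%E -> a = b + c.
Proof. by rewrite -EFinD => -[]. Qed.

Lemma efin4 (a b c d : Real) : (a%:E + b%:E)%E = (c%:E + d%:E)%E -> a + b = c + d.
Proof. by rewrite -!EFinD => -[]. Qed.

Definition imP (f : N -> N) (X : N -> Prop) : N -> Prop := fun w => exists2 u, X u & f u = w.

Lemma imP_submod o X : is_submod X -> is_submod (imP (op o) X).
Proof.
move=> hX; split; first by exists 0; [exact: submod0 | exact: op0].
move=> a _ _ [u hu <-] [v hv <-]; exists (a *: u + v); first exact: submodL.
by rewrite (@op_lin o X).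
Qed.

Lemma ker_submod o X : is_submod X -> is_submod (fun v => X v /\ op o v = 0).
Proof.
move=> hX; split; first by split; [exact: submod0 | exact: op0].
move=> a u v [hu fu] [hv fv]; split; first exact: submodL.
by rewrite (@op_lin o X) // fu fv scaler0 addr0.
Qed.

Definition Bk (A B : nat -> N -> Prop) o : nat -> N -> Prop :=
  fun n v => B n v /\ A (n + deg o)%N (op o v).
Definition Bs (B : nat -> N -> Prop) o m u : Prop :=
  if (deg o <= m)%N then B (m - deg o)%N u else u = 0.
Definition Cc (A B : nat -> N -> Prop) o : nat -> N -> Prop :=
  fun m v => exists a u, [/\ A m a, Bs B o m u & v = a + op o u].

Lemma key_rel A B o n : fam_ok A -> fam_ok B -> subF A B ->
  hh A B n - hh A (Bk A B o) n = hh A B (n + deg o) - hh (Cc A B o) B (n + deg o).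
Proof.
move=> [A1 A2 A3] [B1 B2 B3] sAB.
set d := deg o; set f := op o.
have BNf : forall m v, B m v -> Nf m v by [].
have hK := ker_submod o (B1 n).
have hI := imP_submod o (B1 n).
have hBk : is_submod (Bk A B o n).
  split; first by split; [exact: submod0 | rewrite op0; exact: submod0].
  move=> a u v [hu fu] [hv fv]; split; first exact: submodL.
  by rewrite (@op_lin o (fun _ => True)) //; exact: submodL.
have hK' := ker_submod o hBk.
have hI' := imP_submod o hBk.
have hIsub : forall w, imP f (B n) w -> Nf (n + d)%N w.
  by move=> w [u hu <-]; apply: B3; apply: B2.
have hcap := capP_submod (A1 (n + d)%N) hI.
have hplus := plusP_submod (A1 (n + d)%N) hI.
have E1 := rank_nullity Hlam (B1 n) (@op_lin o (B n)).
have E2 := rank_nullity Hlam hBk (@op_lin o (Bk A B o n)).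
have E3 := lam_modular Hlam (A1 (n + d)%N) hI.
have eK : lam N (fun v => Bk A B o n v /\ op o v = 0) = lam N (fun v => B n v /\ op o v = 0).
  apply: lam_ext => v; split; first by case=> -[].
  by case=> hv fv; split => //; split => //; rewrite fv; apply: submod0.
have eI : lam N (fun w => exists2 u, Bk A B o n u & op o u = w) =
          lam N (capP (A (n + d)%N) (imP f (B n))).
  apply: lam_ext => w; split; first by case=> u [hu fu] <-; split => //; exists u.
  by case=> hw [u hu fu]; exists u => //; split => //; rewrite /f in fu; rewrite fu.
have eC : lam N (Cc A B o (n + d)%N) = lam N (plusP (A (n + d)%N) (imP f (B n))).
  apply: lam_ext => v; rewrite /Cc /Bs -/d leq_addl addnK; split.
    by case=> a [u [ha hu ->]]; exists a, (f u); split => //; exists u.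
  by case=> a [y [ha [u hu <-] ->]]; exists a, u.
rewrite eK eI in E2.
have Fn : forall P m, is_submod P -> (forall v, P v -> Nf m v) -> lam N P \is a fin_num.
  by move=> P m hP hPm; rewrite ge0_fin_numE ?lam_ge0 //;
     apply: le_lt_trans (Hfin m); apply: lam_mono => //; exact: Nf_submod.
have hplusN : forall v, plusP (A (n + d)%N) (imP f (B n)) v -> Nf (n + d)%N v.
  by move=> v [a [y [/A3 ha /hIsub hy ->]]]; apply: submodD => //; apply: Nf_submod.
have fK : lam N (fun v => B n v /\ op o v = 0) \is a fin_num.
  by apply: (Fn _ n hK) => v [/B3].
have fI : lam N (imP f (B n)) \is a fin_num by apply: (Fn _ (n + d)%N hI).
have fcap : lam N (capP (A (n + d)%N) (imP f (B n))) \is a fin_num.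
  by apply: (Fn _ (n + d)%N hcap) => v [/A3].
have fA : lam N (A (n + d)%N) \is a fin_num by exact: (Fn _ _ (A1 _) (A3 _)).
have fplus : lam N (plusP (A (n + d)%N) (imP f (B n))) \is a fin_num.
  by apply: (Fn _ (n + d)%N hplus).
have e1 : fine (lam N (B n)) = fine (lam N (fun v => B n v /\ op o v = 0)) + fine (lam N (imP f (B n))).
  by rewrite E1 fineD.
have e2 : fine (lam N (Bk A B o n)) = fine (lam N (fun v => B n v /\ op o v = 0)) + fine (lam N (capP (A (n + d)%N) (imP f (B n)))).
  by rewrite E2 fineD.
have e3 : fine (lam N (plusP (A (n + d)%N) (imP f (B n)))) + fine (lam N (capP (A (n + d)%N) (imP f (B n)))) = fine (lam N (A (n + d)%N)) + fine (lam N (imP f (B n))).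
  by rewrite -!fineD // E3.
rewrite /hh eC; lra.
Qed.

Hypothesis Hnoeth : rees_noetherian xs gam Nf.

Definition Qf (P : nat -> N -> Prop) : (nat -> N) -> Prop :=
  fun w => rees Nf w /\ forall n, P n (w n).

Lemma Qf_sy P : fam_ok P -> rees_Sy_submod xs gam Nf (Qf P).
Proof.
move=> [P1 P2 P3]; split; [|split; [|split]].
- split.
    split; [split; [move=> n; exact: submod0 (Nf_submod n) | by exists 0%N] | ].
    by move=> n; exact: submod0.
  move=> a u v [[u1 [mu u2]] u3] [[v1 [mv v2]] v3]; split; [split|].
  + by move=> n; apply: submodL; [exact: Nf_submod | |].
  + exists (maxn mu mv) => n; rewrite geq_max => /andP[h1 h2].
    have -> : (a *: u + v) n = a *: u n + v n by [].
    by rewrite u2 // v2 // scaler0 addr0.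
  + by move=> n; apply: submodL.
- by move=> w [].
- move=> i w [[w1 [m w2]] w3]; split; [split|].
  + move=> n; rewrite /rees_x; case: ifP => h.
      by have := Nf_op (Some i) (w1 (n - gam i)%N); rewrite /= subnK.
    exact: submod0 (Nf_submod n).
  + exists (m + gam i)%N => n hn; rewrite /rees_x.
    have h : (gam i <= n)%N by apply: leq_trans hn; rewrite leq_addl.
    rewrite h w2; first exact: (op0 (Some i)).
    by rewrite leq_subRL // addnC.
  + move=> n; rewrite /rees_x; case: ifP => h.
      by have := P2 (Some i) _ _ (w3 (n - gam i)%N); rewrite /= subnK.
    exact: submod0.
- move=> w [[w1 [m w2]] w3]; split; [split|].
  + case=> [|n] /=; first exact: submod0 (Nf_submod 0).
    by have := Nf_op None (w1 n); rewrite /= addn1.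
  + exists m.+1 => -[|n] //= hn; exact: w2.
  + case=> [|n] /=; first exact: submod0.
    by have := P2 None _ _ (w3 n); rewrite /= addn1.
Qed.

Lemma base_case A B : fam_ok A -> fam_ok B -> subF A B ->
  (forall o n v, B n v -> A (n + deg o)%N (op o v)) -> EZ (hh A B).
Proof.
move=> [A1 A2 A3] [B1 B2 B3] sAB Hz.
pose Cm (m : nat) : nat -> N -> Prop := fun n v => if (n <= m)%N then B n v else A n v.
have CmA : forall m n v, A n v -> Cm m n v by move=> m n v hv; rewrite /Cm; case: ifP => // _; apply: sAB.
have CmB : forall m n v, Cm m n v -> B n v by move=> m n v; rewrite /Cm; case: ifP => // _; apply: sAB.
have okC : forall m, fam_ok (Cm m).
  move=> m; split.
  - by move=> n; rewrite /Cm; case: (n <= m)%N.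
  - by move=> o n v /CmB /Hz /CmA.
  - by move=> n v /CmB /B3.
have Hinc : forall m w, Qf (Cm m) w -> Qf (Cm m.+1) w.
  move=> m w [hw H]; split => // n; have := H n; rewrite /Cm.
  case: (leqP n m) => h1; first by rewrite (leq_trans h1 (leqnSn m)).
  by case: ifP => // _; apply: sAB.
have [n0 Hn0] := Hnoeth (fun m => Qf_sy (okC m)) Hinc.
exists n0.+1 => n hn.
have E : lam N (B n) = lam N (A n).
  apply: lam_ext => v; split; last exact: sAB.
  move=> hv; pose w := fun m => if m == n then v else 0.
  have Qw : Qf (Cm n) w.
    split; [split|].
    - by move=> m; rewrite /w; case: eqP => [->|_]; [exact: B3|exact: submod0 (Nf_submod m)].
    - exists n.+1 => m hm; rewrite /w; case: eqP => // E; by move: hm; rewrite E ltnn.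
    - move=> m; rewrite /w; case: eqP => [->|_]; first by rewrite /Cm leqnn.
      by case: (okC n) => H _ _; exact: submod0 (H m).
  have := (Hn0 n (ltnW hn) w).1 Qw => -[_ /(_ n)].
  by rewrite /w eqxx /Cm leqNgt hn.
by rewrite /hh E subrr.
Qed.

Lemma Bk_ok A B o : fam_ok A -> fam_ok B -> fam_ok (Bk A B o).
Proof.
move=> [A1 A2 A3] [B1 B2 B3]; split.
- move=> n; split; first by split; [exact: submod0 | rewrite op0; exact: submod0].
  move=> a u v [hu fu] [hv fv]; split; first exact: submodL.
  by rewrite (@op_lin o (fun _ => True)) //; exact: submodL.
- move=> o' n v [hv fv]; split; first exact: B2.
  by rewrite op_comm addnAC; apply: A2.
- by move=> n v [/B3].
Qed.

Lemma Cc_sub A B o : fam_ok A -> fam_ok B -> subF A B -> subF (Cc A B o) B.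
Proof.
move=> [A1 A2 A3] [B1 B2 B3] sAB m _ [a [u [ha hu ->]]]; apply: submodD => //.
  exact: sAB.
move: hu; rewrite /Bs; case: ifP => h.
  by move=> /(B2 o); rewrite subnK.
by move=> ->; rewrite op0; apply: submod0.
Qed.

Lemma A_Cc A B o : fam_ok A -> fam_ok B -> subF A (Cc A B o).
Proof.
move=> [A1 A2 A3] [B1 B2 B3] m v hv; exists v, 0; split => //; last by rewrite op0 addr0.
by rewrite /Bs; case: ifP => // _; apply: submod0.
Qed.

Lemma Cc_ok A B o : fam_ok A -> fam_ok B -> subF A B -> fam_ok (Cc A B o).
Proof.
move=> okA okB sAB; have sCB : subF (Cc A B o) B := Cc_sub okA okB sAB.
have aC : subF A (Cc A B o) := A_Cc o okA okB.
case: okA => A1 A2 A3; case: okB => B1 B2 B3; split.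
- move=> m; split; first exact: aC (submod0 (A1 m)).
  move=> a _ _ [a1 [u1 [ha1 hu1 ->]]] [a2 [u2 [ha2 hu2 ->]]].
  exists (a *: a1 + a2), (a *: u1 + u2); split; first exact: submodL.
    move: hu1 hu2; rewrite /Bs; case: ifP => _; first by move=> *; exact: submodL.
    by move=> -> ->; rewrite scaler0 addr0.
  by rewrite (@op_lin o (fun _ => True)) // scalerDr addrACA.
- move=> o' m _ [a [u [ha hu ->]]].
  exists (op o' a), (op o' u); split; first exact: A2.
    move: hu; rewrite /Bs; case: (leqP (deg o) m) => h1.
      rewrite (leq_trans h1 (leq_addr _ _)) => /(B2 o').
      by rewrite addnBAC.
    move=> ->; rewrite op0; case: ifP => // _; exact: submod0.
  by rewrite opD op_comm.
- by move=> n v /sCB /B3.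
Qed.

Lemma hhC A B o m : fam_ok A -> fam_ok B -> (m < deg o)%N -> hh (Cc A B o) B m = hh A B m.
Proof.
move=> okA okB hm; rewrite /hh; congr (_ - fine _); apply: lam_ext => v; split.
  move=> [a [u [ha hu ->]]]; move: hu; rewrite /Bs leqNgt hm /= => ->.
  by rewrite op0 addr0.
exact: A_Cc.
Qed.

Lemma main_ind (L : seq (option 'I_k)) : forall A B, fam_ok A -> fam_ok B -> subF A B ->
  (forall o, o \notin L -> forall n v, B n v -> A (n + deg o)%N (op o v)) ->
  EZ (Dl (map deg L) (hh A B)).
Proof.
elim: L => [|o L IH] A B okA okB sAB Hz.
  by apply: base_case => // o; apply: Hz.
rewrite /= -Dl_Df.
have -> : Df (deg o) (hh A B) = subf (hh (Cc A B o) B) (Sh (deg o) (hh A (Bk A B o))).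
  apply: funext => n; rewrite /Df /subf /Sh; case: leqP => h.
    have := @key_rel _ _ o (n - deg o) okA okB sAB; rewrite subnK // => E; lra.
  by rewrite !subr0; symmetry; apply: hhC.
rewrite Dl_sub Dl_Sh; apply: EZ_sub; last apply: EZ_Sh.
- apply: IH; [exact: Cc_ok | exact: okB | exact: Cc_sub |].
  move=> o' ho' n v hv; case: (eqVneq o' o) => [->|ne].
    exists 0, v; split; [by case: okA => A1 _ _; apply: submod0 | | by rewrite add0r].
    by rewrite /Bs leq_addl addnK.
  apply: A_Cc => //; apply: Hz => //; by rewrite in_cons negb_or ne.
- apply: IH; [exact: okA | exact: Bk_ok | |].
    by move=> n v hv; split; [exact: sAB | case: okA => _ A2 _; exact: A2].
  move=> o' ho' n v [hv fv]; case: (eqVneq o' o) => [->|ne] //.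
  by apply: Hz => //; rewrite in_cons negb_or ne.
Qed.

Lemma part2 : exists p : {poly Real},
     forall n : nat,
       \sum_(j < n.+1)
          ((1 - 'X) * \prod_(i < k) (1 - 'X^(gam i)) : {poly Real})`_j
          * fine (lam N (Nf (n - j)%N))
       = p`_n.
Proof.
set Q := (_ * _ : {poly Real}).
have hQ : Q = \prod_(d <- 1%N :: map gam (index_enum 'I_k)) (1 - 'X^d).
  by rewrite big_cons expr1 big_map.
pose A : nat -> N -> Prop := fun _ v => v = 0.
have okA : fam_ok A.
  split.
  - move=> n; split => // a u v -> ->; by rewrite scaler0 addr0.
  - by move=> o n v ->; rewrite op0.
  - by move=> n v ->; apply: submod0; apply: Nf_submod.
have okB : fam_ok Nf.
  split; [exact: Nf_submod | exact: Nf_op | by []].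
have sAB : subF A Nf by move=> n v ->; apply: submod0; apply: Nf_submod.
have := main_ind (L := None :: map Some (index_enum 'I_k)) okA okB sAB.
case.
  move=> o; rewrite in_cons negb_or; case: o => [i|] //=.
  by rewrite (map_f Some (mem_index_enum i)).
move=> m Hm.
have hh0 : hh A Nf = fun n => fine (lam N (Nf n)).
  apply: funext => n; rewrite /hh /A.
  by case: Hlam => _ [-> _]; rewrite subr0.
have hs : map deg (None :: map Some (index_enum 'I_k)) = 1%N :: map gam (index_enum 'I_k).
  by rewrite /= -map_comp.
rewrite hs hh0 -conv_prod in Hm.
rewrite hQ.
exists (\poly_(i < m) conv (\prod_(d <- 1%N :: map gam (index_enum 'I_k)) (1 - 'X^d))
   (fun n => fine (lam N (Nf n))) i) => n.
rewrite coef_poly; case: ltnP => hn; first by [].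
exact: (Hm n hn).
Qed.

End MainPart.

Lemma part1 (R : comPzRingType) (Real : realType)
  (lam : forall M : lmodType R, (M -> Prop) -> \bar Real)
  (N : lmodType R) (k : nat) (xs : 'I_k -> N -> N) (gam : 'I_k -> nat)
  (Nf : nat -> N -> Prop) :
  length_fun lam -> incr_filtering xs gam Nf ->
  forall n : nat, lam N (Nf n) = lam (nat -> N) (rees_comp Nf n).
Proof.
move=> Hlam HF n; case: Hlam => _ [_ [Hiso _]].
have NfS : forall m, is_submod (Nf m) by case: HF.
pose f : N -> (nat -> N) := fun v m => if m == n then v else 0.
apply: (Hiso N (nat -> N) _ _ f).
- exact: NfS.
- split.
    split; [split; [move=> m; exact: submod0 (NfS m) | by exists 0%N] | by []].
  move=> a u v [[u1 [mu u2]] u3] [[v1 [mv v2]] v3]; split; [split|].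
  + by move=> m; apply: submodL.
  + exists (maxn mu mv) => m; rewrite geq_max => /andP[h1 h2].
    have -> : (a *: u + v) m = a *: u m + v m by [].
    by rewrite u2 // v2 // scaler0 addr0.
  + move=> m hm; have -> : (a *: u + v) m = a *: u m + v m by [].
    by rewrite u3 // v3 // scaler0 addr0.
- move=> a u v _ _; apply: funext => m.
  have -> : (a *: f u + f v) m = a *: f u m + f v m by [].
  by rewrite /f; case: eqP => // _; rewrite scaler0 addr0.
- by move=> u v _ _ /(congr1 (fun w => w n)); rewrite /f eqxx.
- move=> w; split.
    move=> [[w1 _] w3]; exists (w n) => //; apply: funext => m; rewrite /f.
    by case: eqP => [->|/w3 ->].
  move=> [u hu <-]; split; [split|].
  + by move=> m; rewrite /f; case: eqP => [->|_] //; exact: submod0 (NfS m).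
  + exists n.+1 => m hm; rewrite /f; case: eqP => // E; by move: hm; rewrite E ltnn.
  + by move=> m /eqP hm; rewrite /f (negbTE hm).
Qed.

Theorem theorem4p2 (R : comPzRingType) (Real : realType)
  (lam : forall M : lmodType R, (M -> Prop) -> \bar Real)
  (N : lmodType R) (k : nat) (xs : 'I_k -> N -> N) (gam : 'I_k -> nat)
  (Nf : nat -> N -> Prop) :
  length_fun lam -> S_module_str xs -> incr_filtering xs gam Nf ->
  (* F_N = F_Rees(N), coefficientwise *)
  (forall n : nat, lam N (Nf n) = lam (nat -> N) (rees_comp Nf n)) /\
  ((forall i, (0 < gam i)%N) ->
   (forall n, (lam N (Nf n) < +oo)%E) ->
   rees_noetherian xs gam Nf ->
   exists p : {poly Real},
     forall n : nat,
       \sum_(j < n.+1)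
          ((1 - 'X) * \prod_(i < k) (1 - 'X^(gam i)) : {poly Real})`_j
          * fine (lam N (Nf (n - j)%N))
       = p`_n).
Proof.
move=> Hlam HS HF; split; first exact: (part1 Hlam HF).
move=> _ Hfin Hnoeth.
exact: (part2 Hlam HS HF Hfin Hnoeth).
Qed.
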